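(* Let $G$ be an oriented graph on $[n]$ with $|\mathcal{P}(G)|\ge 2$. Then there exist $\sigma,\rho\in\mathcal{P}(G)$ such that \[d_\ell(\sigma,\rho)=\max_{1\le i\le n}\{\,n-|R(i)|-|R^{-1}(i)|-1\,\}.\]
   Context: Write a permutation $\sigma\in S_n$ as $\sigma=\sigma_1\cdots\sigma_n$. A permutation $\sigma$ satisfies an oriented graph $G=([n],E)$ if $\sigma_u>\sigma_v$ for every oriented edge $u\to v\in E$; $\mathcal{P}(G)$ is the set of permutations satisfying $G$. Write $u\rightsquigarrow v$ if there is an oriented path from $u$ to $v$ in $G$. For a vertex $v$, $R(v)=\{u\in[n]\setminus\{v\}: v\rightsquigarrow u\}$ and $R^{-1}(v)=\{u\in[n]\setminus\{v\}: u\rightsquigarrow v\}$. The $\ell_\infty$-metric is $d_\ell(\sigma,\rho)=\max_{1\le i\le n}|\sigma_i-\rho_i|$. *)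

(* Defs.v *)
From mathcomp Require Import all_boot all_order all_fingroup.
Set Implicit Arguments. Unset Strict Implicit. Unset Printing Implicit Defensive.

(* Vertices [n] are encoded as 'I_n (vertex i+1 <-> ordinal i); a permutation
   sigma in S_n is a 'S_n, with sigma_i encoded by (sigma i : nat) (values
   shifted by -1, which does not affect comparisons or differences). *)

Definition oriented_graph (n : nat) (e : rel 'I_n) : Prop :=
  (forall u, ~~ e u u) /\ (forall u v, e u v -> ~~ e v u).

Definition satisfying_perms (n : nat) (e : rel 'I_n) : {set 'S_n} :=
  [set s : 'S_n | [forall u, forall v, e u v ==> (s v < s u)]].

Definition reach (n : nat) (e : rel 'I_n) (v : 'I_n) : {set 'I_n} :=
  [set u | (u != v) && connect e v u].
Definition reach_inv (n : nat) (e : rel 'I_n) (v : 'I_n) : {set 'I_n} :=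
  [set u | (u != v) && connect e u v].

Definition d_ell (n : nat) (s r : 'S_n) : nat :=
  \max_(i : 'I_n) maxn (s i - r i) (r i - s i).

(* Main.v *)
Require Import Defs.
From mathcomp Require Import all_boot all_order all_fingroup.
From mathcomp Require Import zify.

Section Aux.
Variable n : nat.

Lemma card_ltk (k : nat) (H : k <= n) : #|[set j : 'I_n | j < k]| = k.
Proof.
have -> : [set j : 'I_n | j < k] = [set widen_ord H x | x : 'I_k].
  apply/setP => j; rewrite inE; apply/idP/imsetP.
    move=> jk; by exists (Ordinal jk) => //; apply: val_inj.
  by case=> x _ ->; rewrite /= ltn_ord.
rewrite card_imset ?card_ord //.
by move=> x y /(congr1 val) /= xy; apply: val_inj.
Qed.

Lemma card_lt_perm (s : 'S_n) (u : 'I_n) : #|[set w | s w < s u]| = s u.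
Proof.
have -> : [set w | s w < s u] = s @^-1: [set j : 'I_n | j < s u].
  by apply/setP => w; rewrite !inE.
by rewrite card_preimset ?card_ltk ?(ltnW (ltn_ord _)) //; apply: perm_inj.
Qed.

Variable f : 'I_n -> nat.
Definition rk (u : 'I_n) : nat := #|[set w | f w < f u]|.

Lemma rk_lt u : rk u < n.
Proof.
rewrite /rk -[X in _ < X](card_ord n) -cardsT; apply: proper_card.
apply/properP; split; first exact: subsetT.
by exists u; rewrite !inE ?ltnn.
Qed.

Lemma rk_mono u v : f u < f v -> rk u < rk v.
Proof.
move=> uv; apply: proper_card; apply/properP; split.
  by apply/subsetP => w; rewrite !inE => /ltn_trans; apply.
by exists u; rewrite !inE ?ltnn.
Qed.

Definition rkord u : 'I_n := Ordinal (rk_lt u).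

Hypothesis finj : injective f.

Lemma rkord_inj : injective rkord.
Proof.
move=> u v /(congr1 val) /= H.
case: (ltngtP (f u) (f v)) => h.
- by have := rk_mono _ _ h; rewrite H ltnn.
- by have := rk_mono _ _ h; rewrite H ltnn.
- exact: finj.
Qed.

Definition rkperm : 'S_n := perm rkord_inj.

Lemma rkpermE u : rkperm u = rk u :> nat.
Proof. by rewrite /rkperm permE. Qed.

End Aux.
Arguments rkperm {n f}.

Lemma connect_le n (e : rel 'I_n) (s : 'S_n) x y :
  s \in satisfying_perms e -> connect e x y -> s y <= s x.
Proof.
rewrite inE => /forallP H /connectP [p pth ->] {y}.
elim: p x pth => [|z p IH] x //= /andP [exz pz].
apply: leq_trans (IH _ pz) _.
by have := forallP (H x) z => /implyP /(_ exz) /ltnW.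
Qed.

Arguments connect_le {n e s x y}.

Lemma upper n (e : rel 'I_n) (s r : 'S_n) :
  s \in satisfying_perms e -> r \in satisfying_perms e ->
  d_ell s r <= \max_(i : 'I_n) (n - #|reach e i| - #|reach_inv e i| - 1).
Proof.
have bnd : forall (t : 'S_n) i, t \in satisfying_perms e ->
    #|reach e i| <= t i /\ t i <= n - #|reach_inv e i| - 1.
  move=> t i tP; split.
    rewrite -card_lt_perm; apply: subset_leq_card; apply/subsetP => w.
    rewrite !inE => /andP [wi ciw].
    rewrite ltn_neqAle (connect_le tP ciw) andbT.
    by apply: contra wi => /eqP /val_inj /perm_inj ->.
  have : [set w | t w < t i] \subset ~: (i |: reach_inv e i).
    apply/subsetP => w; rewrite !inE negb_or => lt.
    have wi : w != i by apply: contraTneq lt => ->; rewrite ltnn.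
    rewrite wi /=; apply: contraTN lt => cwi.
    by rewrite -leqNgt (connect_le tP cwi).
  move/subset_leq_card; rewrite card_lt_perm.
  have := cardsC (i |: reach_inv e i); rewrite cardsU1 card_ord.
  have -> : i \notin reach_inv e i by rewrite inE eqxx.
  rewrite /=; set a := #|~: _|; set b := #|reach_inv e i|; set c := t i : nat.
  move=> hc hl; lia.
move=> sP rP; apply/bigmax_leqP => i _.
apply: leq_trans (leq_bigmax i).
have [h1 h2] := bnd s i sP; have [h3 h4] := bnd r i rP.
rewrite geq_max; apply/andP; split; lia.
Qed.

Section Lower.
Variables (n : nat) (e : rel 'I_n) (s : 'S_n).
Hypothesis sP : s \in satisfying_perms e.

Definition key (b : 'I_n -> bool) (w : 'I_n) : nat := b w * n + s w.

Lemma key_inj (b : 'I_n -> bool) : injective (key b).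
Proof.
move=> u v; rewrite /key => H.
have hu := ltn_ord (s u); have hv := ltn_ord (s v).
have : s u = s v :> nat by case: (b u) (b v) H => [] [] /=; lia.
by move/val_inj/perm_inj.
Qed.

Lemma key_sat (b : 'I_n -> bool) : (forall u v, e u v -> b v -> b u) ->
  rkperm (key_inj b) \in satisfying_perms e.
Proof.
move=> bH; rewrite inE; apply/forallP => u; apply/forallP => v; apply/implyP => euv.
rewrite !rkpermE; apply: rk_mono; rewrite /key.
move: sP; rewrite inE => /forallP /(_ u) /forallP /(_ v) /implyP /(_ euv) lt.
have hu := ltn_ord (s u); have hv := ltn_ord (s v).
move: (bH u v euv); case: (b u) (b v) => [] [] /=; try lia.
Qed.

Variable i : 'I_n.
Definition b1 (w : 'I_n) := ~~ connect e i w.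
Definition b2 (w : 'I_n) := connect e w i.

Lemma b1_ok u v : e u v -> b1 v -> b1 u.
Proof.
rewrite /b1 => euv; apply: contra => ciu.
exact: connect_trans ciu (connect1 euv).
Qed.

Lemma b2_ok u v : e u v -> b2 v -> b2 u.
Proof.
rewrite /b2 => euv cvi; exact: connect_trans (connect1 euv) cvi.
Qed.

Lemma sig_i : rkperm (key_inj b1) i = #|reach e i| :> nat.
Proof.
rewrite rkpermE /rk; apply: eq_card => w; rewrite !inE /key /b1 connect0 /=.
have hi := ltn_ord (s i); have hw := ltn_ord (s w).
case ciw: (connect e i w) => /=; last by rewrite andbF; lia.
rewrite andbT add0n.
apply/idP/idP.
  by apply: contraTneq => ->; rewrite ltnn.
move=> wi; rewrite ltn_neqAle (connect_le sP ciw) andbT.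
by apply: contra wi => /eqP /val_inj /perm_inj ->.
Qed.

Lemma rho_i : rkperm (key_inj b2) i = n - #|reach_inv e i| - 1 :> nat.
Proof.
rewrite rkpermE /rk.
have -> : [set w | key b2 w < key b2 i] = ~: (i |: reach_inv e i).
  apply/setP => w; rewrite !inE /key /b2 connect0 /=.
  have hi := ltn_ord (s i); have hw := ltn_ord (s w).
  case cwi: (connect e w i) => /=; rewrite ?andbT ?andbF ?orbF.
    rewrite ltn_add2l; apply/idP/idP.
      by move=> lt; move: (connect_le sP cwi); lia.
    by rewrite orbN.
  have -> : (w != i) by apply/eqP => wi; rewrite wi connect0 in cwi.
  by apply/idP; rewrite mul0n mul1n add0n; apply: (leq_trans hw); rewrite leq_addr.
have := cardsC (i |: reach_inv e i); rewrite cardsU1 card_ord.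
have -> : i \notin reach_inv e i by rewrite inE eqxx.
rewrite /=; set a := #|~: _|; set b := #|reach_inv e i|.
move=> hc; lia.
Qed.

End Lower.
Arguments key_sat {n e s} sP b.
Arguments key_inj {n e s} sP b.
Arguments sig_i {n e s} sP {i}.
Arguments rho_i {n e s} sP {i}.

Theorem mainTheorem5 (n : nat) (e : rel 'I_n) :
  oriented_graph e ->
  2 <= #|satisfying_perms e| ->
  exists s r : 'S_n,
    [/\ s \in satisfying_perms e, r \in satisfying_perms e &
        d_ell s r = \max_(i : 'I_n) (n - #|reach e i| - #|reach_inv e i| - 1)].
Proof.
move=> _ c2.
have [s sP] : exists s, s \in satisfying_perms e.
  by apply/set0Pn; rewrite -card_gt0; lia.
case: (posnP n) => n0.
  exists s, s; split => //; apply/eqP; rewrite eqn_leq upper //=.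
  by clear -n0; subst n; rewrite big_ord0.
have [i0 Hi0] := eq_bigmax (fun i : 'I_n => n - #|reach e i| - #|reach_inv e i| - 1)
   (ltac:(by rewrite card_ord)).
have s1P := key_sat sP _ (@b1_ok n e i0).
have s2P := key_sat sP _ (@b2_ok n e i0).
exists (rkperm (key_inj sP (b1 n e i0))), (rkperm (key_inj sP (b2 n e i0))).
split => //; apply/eqP; rewrite eqn_leq upper //= Hi0.
apply: leq_trans (leq_bigmax i0).
rewrite (sig_i sP) (rho_i sP).
set a := #|reach e i0|; set b := #|reach_inv e i0|.
rewrite leq_max; apply/orP; right; lia.
Qed.
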